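(* Let $\eta,\lambda\in\mathbb{C}$, let $k\ge1$, and let $\tau_1,\dots,\tau_k$ be positive integers. Then in $\mathcal{F}_{\eta,\lambda}$, $$L_{-\tau_1}L_{-\tau_2}\cdots L_{-\tau_k}|\eta\rangle=(\tau_k)(\tau_k+\tau_{k-1})\cdots(\tau_k+\tau_{k-1}+\cdots+\tau_2)\,\big[\eta+(\tau_k-1)\lambda\big]\,\alpha_{-(\tau_1+\cdots+\tau_k)}|\eta\rangle+R,$$ where $R$ is a linear combination of monomials $\alpha_{-\sigma_1}\cdots\alpha_{-\sigma_j}|\eta\rangle$ with $j\ge2$. (For $k=1$ the product of partial sums is empty and equals $1$.) Consequently, if $\Delta h$ is a negative integer and $U=\sum_{|\tau|=-\Delta h}A_\tau L_{-\tau_1}\cdots L_{-\tau_{\ell(\tau)}}$ with $\tau_1\ge\cdots\ge\tau_{\ell(\tau)}$, then the coefficient of $\alpha_{\Delta h}|\eta\rangle$ in the monomial basis expansion of $U|\eta\rangle$ is $$-\frac{1}{\Delta h}\sum_{|\tau|=-\Delta h}[\tau]!\,\big[\eta+(\tau_{\ell(\tau)}-1)\lambda\big]A_\tau.$$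
   Context: The Heisenberg modes satisfy $[\alpha_m,\alpha_n]=m\delta_{m,-n}$. $\mathcal{F}_{\eta,\lambda}$ is the Fock space generated by $|\eta\rangle$, with $\alpha_n|\eta\rangle=0$ for $n>0$ and $\alpha_0|\eta\rangle=\eta|\eta\rangle$. It has basis the monomials $\alpha_{-\sigma_1}\cdots\alpha_{-\sigma_j}|\eta\rangle$ ($\sigma$ a partition) and carries the Virasoro action $$L_n=\tfrac12\sum_k:\alpha_k\alpha_{n-k}:-\lambda(n+1)\alpha_n,$$ where normal ordering places positive-index modes to the right. For a partition $\tau=(\tau_1\ge\cdots\ge\tau_\ell>0)$, define $[\tau]!=(\tau_1+\cdots+\tau_\ell)(\tau_2+\cdots+\tau_\ell)\cdots(\tau_\ell)$. *)

(* Defs.v *)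
From HB Require Import structures.
From mathcomp Require Import all_boot all_order all_algebra.
Set Implicit Arguments. Unset Strict Implicit. Unset Printing Implicit Defensive.
Import Order.TTheory GRing.Theory Num.Theory.
Local Open Scope ring_scope.

(* A monomial alpha_{-s_1} ... alpha_{-s_j} |eta> is encoded by the
   partition s = [:: s_1; ...; s_j] (positive parts, sorted nonincreasingly). *)
Definition mono := seq nat.

Definition state (R : Type) := seq (R * mono).

Definition coef (R : nmodType) (v : state R) (s : mono) : R :=
  \sum_(p <- v | p.2 == s) p.1.

Definition veq (R : nmodType) (v w : state R) : Prop :=
  forall s : mono, coef v s = coef w s.

Definition scale (R : pzSemiRingType) (c : R) (v : state R) : state R :=
  [seq (c * p.1, p.2) | p <- v].

Definition act (R : pzSemiRingType) (f : mono -> state R) (v : state R) : state R :=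
  flatten [seq [seq (p.1 * q.1, q.2) | q <- f p.2] | p <- v].

Definition vac (R : pzSemiRingType) : state R := [:: (1, [::])].

Section Fock.
Variables (R : numClosedFieldType) (eta lam : R).

(* Heisenberg mode alpha_n on a monomial, using [alpha_m, alpha_n] = m delta_{m,-n},
   alpha_n |eta> = 0 (n > 0), alpha_0 |eta> = eta |eta>. *)
Definition alpha_m (n : int) (s : mono) : state R :=
  match n with
  | Posz 0 => [:: (eta, s)]
  | Posz m => [:: ((m * count_mem m s)%:R, rem m s)]
  | Negz m => [:: (1, sort geq (m.+1 :: s))]
  end.

Definition alpha (n : int) (v : state R) : state R := act (alpha_m n) v.

(* normally ordered product :alpha_a alpha_b: applied to a monomial
   (the mode with the larger index acts first, i.e. stands to the right) *)
Definition nop (a b : int) (s : mono) : state R :=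
  if a < b then alpha a (alpha_m b s) else alpha b (alpha_m a s).

(* L_n = 1/2 sum_k :alpha_k alpha_{n-k}: - lam (n+1) alpha_n on a monomial s.
   All terms with |k| > |n| + |s| vanish on s, so the sum over k in Z is
   exactly the finite sum over -N <= k <= N, N = |n| + sumn s. *)
Definition L_m (n : int) (s : mono) : state R :=
  let N := (`|n|%N + sumn s)%N in
  scale (2%:R^-1)
    (flatten [seq nop (i%:Z - N%:Z) (n - (i%:Z - N%:Z)) s | i <- iota 0 (N.*2.+1)])
  ++ scale (- (lam * (n + 1)%:~R)) (alpha_m n s).

Definition Lop (n : int) (v : state R) : state R := act (L_m n) v.

Definition Lword (tau : seq nat) : state R :=
  foldr (fun t v => Lop (- (t%:Z)) v) (vac R) tau.

(* U |eta> for U = sum over the list of pairs (A, tau) of A * L_{-tau} *)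
Definition Ustate (Us : seq (R * seq nat)) : state R :=
  flatten [seq scale p.1 (Lword p.2) | p <- Us].

End Fock.

Definition is_partition (tau : seq nat) : bool :=
  sorted geq tau && all (fun t => 0 < t)%N tau.

Definition tfact (tau : seq nat) : nat :=
  (\prod_(i < size tau) sumn (drop i tau))%N.

(* Main.v *)
Require Import Defs.
From HB Require Import structures.
From mathcomp Require Import all_boot all_order all_algebra.
From mathcomp Require Import zify ring lra.
Import Order.TTheory GRing.Theory Num.Theory.
Local Open Scope ring_scope.
Set Implicit Arguments. Unset Strict Implicit.

Lemma cf_nil (R : nmodType) s : coef ([::] : state R) s = 0.
Proof. by rewrite /coef big_nil. Qed.

Lemma cf_cons (R : nmodType) (p : R * mono) v s :
  coef (p :: v) s = (if p.2 == s then p.1 else 0) + coef v s.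
Proof. by rewrite /coef big_cons; case: ifP; rewrite ?add0r. Qed.

Lemma cf_cat (R : nmodType) (v w : state R) s : coef (v ++ w) s = coef v s + coef w s.
Proof. by rewrite /coef big_cat. Qed.

Lemma cf_flatten (R : nmodType) (ws : seq (state R)) s :
  coef (flatten ws) s = \sum_(w <- ws) coef w s.
Proof.
elim: ws => [|w ws IH]; first by rewrite big_nil cf_nil.
by rewrite /= cf_cat IH big_cons.
Qed.

Lemma cf_scale (R : pzSemiRingType) (c : R) v s : coef (scale c v) s = c * coef v s.
Proof.
by rewrite /coef /scale big_map mulr_sumr.
Qed.

Lemma cf_act (R : pzSemiRingType) (f : mono -> state R) v s :
  coef (act f v) s = \sum_(p <- v) p.1 * coef (f p.2) s.
Proof.
rewrite /act cf_flatten big_map; apply: eq_bigr => p _.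
by rewrite /coef big_map mulr_sumr.
Qed.

Lemma cf_zero (R : nmodType) (Q : pred mono) (v : state R) s :
  all (fun p => (p.1 == 0) || Q p.2) v -> ~~ Q s -> coef v s = 0.
Proof.
move=> /allP H Hs; rewrite /coef big1_seq // => p /andP [/eqP E Hp].
by move: (H p Hp); rewrite E (negbTE Hs) orbF => /eqP.
Qed.

Lemma all_flat (T : Type) (P : pred T) (ss : seq (seq T)) :
  all P (flatten ss) = all (all P) ss.
Proof. by elim: ss => //= s ss IH; rewrite all_cat IH. Qed.

Lemma all_act (R : idomainType) (f : mono -> state R) v (P Q : pred mono) :
  all (fun p => (p.1 == 0) || P p.2) v ->
  (forall s, P s -> all (fun q => (q.1 == 0) || Q q.2) (f s)) ->
  all (fun q => (q.1 == 0) || Q q.2) (act f v).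
Proof.
move=> /allP Hv Hf; rewrite /act all_flat; apply/allP => w /mapP [p Hp ->].
rewrite all_map; apply/allP => q Hq /=.
case/orP: (Hv p Hp) => [/eqP -> | HP]; first by rewrite mul0r eqxx.
move/allP: (Hf _ HP) => /(_ q Hq) /orP [/eqP -> | ->]; by rewrite ?mulr0 ?eqxx ?orbT.
Qed.

Definition aspec (R : nmodType) (n : int) (s : mono) (x : R * mono) :=
  x.1 = 0 \/ ((sumn x.2)%:Z + n = (sumn s)%:Z /\
    (0 < n -> (size x.2).+1 = size s) /\ (n = 0 -> size x.2 = size s) /\
    (n < 0 -> size x.2 = (size s).+1)).

Lemma alpha_m_spec (R : numClosedFieldType) (eta : R) n s :
  exists x, alpha_m eta n s = [:: x] /\ aspec n s x.
Proof.
case: n => [[|n]|n] /=; eexists; split; try reflexivity.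
- right; split; first by rewrite addr0.
  by split; [|split] => // H; exfalso; move: H; rewrite ?ltxx.
- have [c0|] := posnP (count_mem n.+1 s).
    by left; rewrite /= c0 muln0.
  rewrite -has_count has_pred1 => Hin; right => /=.
  move: (perm_sumn (perm_to_rem Hin)) (size_rem Hin) => /= Hs Hz.
  split; first by rewrite Hs; lia.
  have : (0 < size s)%N by case: (s) Hin.
  split; [move=> _; lia|split => H0]; exfalso; move: H0 => //.
- right => /=.
  move: (perm_sumn (permEl (perm_sort geq (n.+1 :: s)))) => /= Hs.
  rewrite size_sort /= Hs NegzE; split; first lia.
  by split => //; split.
Qed.

Definition gpred (s : mono) (t : nat) (q2 : mono) :=
  (sumn q2 == sumn s + t)%N && (size s <= size q2)%N.

Lemma comp_good (R : numClosedFieldType) (eta : R) x y s t :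
  x + y = - t%:Z ->
  all (fun q => (q.1 == 0) || gpred s t q.2) (alpha eta x (alpha_m eta y s)).
Proof.
move=> Hxy.
have [[c1 s1] [E Hp]] := alpha_m_spec eta y s.
rewrite /alpha /act E /=.
have [[c2 s2] [E2 Hq]] := alpha_m_spec eta x s1.
rewrite E2 /= andbT.
case: Hp => [/= -> | /= [Hs1 [H1 [H2 H3]]]]; first by rewrite mul0r eqxx.
case: Hq => [/= -> | /= [Hs2 [H1' [H2' H3']]]]; first by rewrite mulr0 eqxx.
apply/orP; right; rewrite /gpred; apply/andP; split; [apply/eqP|]; lia.
Qed.

Lemma nop_good (R : numClosedFieldType) (eta : R) a b s t :
  a + b = - t%:Z ->
  all (fun q => (q.1 == 0) || gpred s t q.2) (nop eta a b s).
Proof.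
move=> H; rewrite /nop; case: ifP => _; apply: comp_good => //.
by rewrite addrC.
Qed.

Lemma all_scale (R : idomainType) (c : R) v (P : pred mono) :
  all (fun q => (q.1 == 0) || P q.2) v -> all (fun q => (q.1 == 0) || P q.2) (scale c v).
Proof.
move=> /allP H; rewrite /scale all_map; apply/allP => q Hq /=.
by case/orP: (H q Hq) => [/eqP -> | ->]; rewrite ?mulr0 ?eqxx ?orbT.
Qed.

Lemma L_good (R : numClosedFieldType) (eta lam : R) t s :
  all (fun q => (q.1 == 0) || gpred s t q.2) (L_m eta lam (- t%:Z) s).
Proof.
rewrite /L_m all_cat; apply/andP; split; apply: all_scale.
  rewrite all_flat all_map; apply/allP => i _ /=; apply: nop_good.
  by rewrite addrC subrK.
have [[c1 s1] [-> Hp]] := alpha_m_spec eta (- t%:Z) s.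
rewrite /= andbT.
case: Hp => [/= -> | /= [Hs1 [H1 [H2 H3]]]]; first by rewrite eqxx.
apply/orP; right; rewrite /gpred; apply/andP; split; [apply/eqP|]; lia.
Qed.

Lemma Lword_grade (R : numClosedFieldType) (eta lam : R) tau :
  all (fun q => (q.1 == 0) || (sumn q.2 == sumn tau)) (Lword eta lam tau).
Proof.
elim: tau => [|t tau IH] /=; first by rewrite /vac /= eqxx orbT.
rewrite /Lop; apply: (all_act (P := fun s => sumn s == sumn tau) (Q := fun q2 => sumn q2 == sumn (t :: tau)) IH) => s /eqP Hs.
apply/allP => q Hq; move/allP: (L_good eta lam t s) => /(_ q Hq).
case/orP => [-> // | /andP [/eqP E _]]; apply/orP; right.
by rewrite E Hs addnC.
Qed.
Lemma coef1 (R : nmodType) (c : R) s m : coef [:: (c, s)] m = if s == m then c else 0.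
Proof. by rewrite cf_cons cf_nil addr0. Qed.

Lemma sort1 (x : nat) : sort geq [:: x] = [:: x].
Proof. by []. Qed.

Lemma neq_size (s m : mono) : size s != size m -> (s == m) = false.
Proof. by apply: contraNF => /eqP ->. Qed.

Lemma size_sortc x s : size (sort geq (x :: s)) = (size s).+1.
Proof. by rewrite size_sort. Qed.

Lemma nop_vac (R : numClosedFieldType) (eta : R) a b t :
  (0 < t)%N -> a + b = - t%:Z ->
  coef (nop eta a b [::]) [:: t] = (a == 0)%:R * eta + (b == 0)%:R * eta.
Proof.
move=> t0.
case: a => [[|a]|a]; case: b => [[|b]|b] => H; rewrite /nop /alpha /act /=.
all: try (exfalso; move: H; rewrite ?NegzE; lia).
all: try case: ifP => _.
all: rewrite coef1 /= ?muln0 ?mul0r ?mulr0 ?mul1r ?mulr1 ?addr0 ?add0r ?if_same //.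
all: try (rewrite neq_size // !size_sortc //).
all: rewrite sort1; move: H; rewrite ?NegzE => H.
all: case: eqP => // Hne; exfalso; apply: Hne; congr [:: _]; lia.
Qed.

Lemma nop_one (R : numClosedFieldType) (eta : R) a b t u :
  (0 < t)%N -> (0 < u)%N -> a + b = - t%:Z ->
  coef (nop eta a b [:: u]) [:: u + t] = (a == u%:Z)%:R * u%:R + (b == u%:Z)%:R * u%:R.
Proof.
move=> t0 u0.
case: a => [[|a]|a]; case: b => [[|b]|b] => H; rewrite /nop /alpha /act /=.
all: try (exfalso; move: H; rewrite ?NegzE; lia).
all: try case: ifP => Hif.
all: rewrite coef1 /= ?muln0 ?mul0r ?mulr0 ?mul1r ?mulr1 ?addr0 ?add0r ?if_same //.
all: try (rewrite (@neq_size (sort _ _)); last by rewrite !size_sortc).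
all: rewrite ?sort1 ?eqz_nat.
all: try (move/eqP: Hif => Hu; subst u; rewrite [X in (nat_of_bool X)%:R * _]eqxx /= mulr1n mul1r; case: eqP => // Hne;
   exfalso; apply: Hne; congr [:: _]; move: H; rewrite ?NegzE; lia).
all: try (rewrite eq_sym Hif mul0r //).
all: try (case: eqP => E; [lia | by rewrite mul0r]).
all: rewrite ?addn0 ?muln1 //.
all: (move/eqP: Hif => Hu; subst u; rewrite [X in (nat_of_bool X)%:R * _]eqxx /= mulr1n mul1r; case: eqP => // Hne;
   exfalso; apply: Hne; congr [:: _]; move: H; rewrite ?NegzE; lia).
Qed.

Lemma sum_ind (R : pzSemiRingType) M j (x : R) :
  (j < M)%N -> \sum_(i <- iota 0 M) (i == j)%:R * x = x.
Proof.
move=> jM; rewrite (bigD1_seq j) ?mem_iota ?iota_uniq //= eqxx mul1r big1 ?addr0 //.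
by move=> i /negbTE ->; rewrite mul0r.
Qed.

Lemma L_vac (R : numClosedFieldType) (eta lam : R) t :
  (0 < t)%N -> coef (L_m eta lam (- t%:Z) [::]) [:: t] = eta + (t%:R - 1) * lam.
Proof.
move=> t0; rewrite /L_m cf_cat !cf_scale cf_flatten big_map.
rewrite abszN absz_nat (_ : sumn [::] = 0%N) // addn0.
rewrite (eq_bigr (fun i => (i == t)%:R * eta + (i == 0)%N%:R * eta)); last first.
  move=> i _; rewrite nop_vac //; last by rewrite addrC subrK.
  rewrite subr_eq0 eqz_nat; congr (_ + _); congr ((nat_of_bool _)%:R * _).
  by rewrite (_ : - t%:Z - (i%:Z - t%:Z) = - i%:Z) ?oppr_eq0 ?eqz_nat //; ring.
rewrite big_split !sum_ind //; last by lia.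
case: t t0 => // t _ /=.
rewrite coef1 sort1 eqxx intrD intrN mulr1.
have H2 : (2%:R : R) != 0 by rewrite pnatr_eq0.
by field.
Qed.

Lemma L_one (R : numClosedFieldType) (eta lam : R) t u :
  (0 < t)%N -> (0 < u)%N -> coef (L_m eta lam (- t%:Z) [:: u]) [:: u + t] = u%:R.
Proof.
move=> t0 u0; rewrite /L_m cf_cat !cf_scale cf_flatten big_map.
rewrite abszN absz_nat (_ : sumn [:: u] = u); last by rewrite /= addn0.
rewrite (eq_bigr (fun i => (i == t + u + u)%:R * u%:R + (i == 0)%N%:R * u%:R)); last first.
  move=> i _; rewrite nop_one //; last by rewrite addrC subrK.
  congr (_ + _); congr ((nat_of_bool _)%:R * _).
    by apply/eqP/eqP; lia.
  by apply/eqP/eqP; lia.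
rewrite big_split !sum_ind //; last by lia.
case: t t0 => // t _ /=.
rewrite coef1 neq_size ?size_sortc // mulr0 addr0.
have H2 : (2%:R : R) != 0 by rewrite pnatr_eq0.
  by field.
Qed.

Lemma L_big (R : numClosedFieldType) (eta lam : R) t s m :
  (1 < size s)%N -> coef (L_m eta lam (- t%:Z) s) [:: m] = 0.
Proof.
move=> Hs; apply: (cf_zero (Q := gpred s t)); first exact: L_good.
by rewrite /gpred /= negb_and -ltnNge Hs orbT.
Qed.

Lemma Lword_cons (R : numClosedFieldType) (eta lam : R) t tau :
  Lword eta lam (t :: tau) = Lop eta lam (- t%:Z) (Lword eta lam tau).
Proof. by []. Qed.

Lemma prod_cons t tau : (0 < size tau)%N ->
  (\prod_(1 <= i < size (t :: tau)) sumn (drop i (t :: tau)))%N =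
  (sumn tau * \prod_(1 <= i < size tau) sumn (drop i tau))%N.
Proof.
move=> H; rewrite big_add1 /= big_ltn //. set F := \prod_(_ <= _ < _) _. by case: (tau) H.
Qed.

Lemma last_cons0 (t : nat) tau : (0 < size tau)%N -> last t tau = last 0%N tau.
Proof. by case: tau. Qed.

Lemma Lword_main (R : numClosedFieldType) (eta lam : R) tau :
  (0 < size tau)%N -> all (fun t => 0 < t)%N tau ->
  coef (Lword eta lam tau) [:: sumn tau] =
  ((\prod_(1 <= i < size tau) sumn (drop i tau))%N)%:R * (eta + ((last 0%N tau)%:R - 1) * lam).
Proof.
elim: tau => [//|t tau IH] _ /andP [t0 Hall].
rewrite Lword_cons /Lop cf_act.
have [E|ne] := eqVneq tau [::].
  subst tau; rewrite /vac big_cons big_nil /= addn0 mul1r addr0 L_vac //.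
  by rewrite big_geq // mul1r.
have sz : (0 < size tau)%N by case: (tau) ne.
have Htau := IH sz Hall.
have M0 : (0 < sumn tau)%N by case: (tau) ne Hall => //= x y _ /andP [H _]; lia.
change (sumn (t :: tau)) with (t + sumn tau)%N.
rewrite (eq_big_seq (fun p => (if p.2 == [:: sumn tau] then p.1 else 0) * (sumn tau)%:R)); last first.
  move=> p Hp; move/allP: (Lword_grade eta lam tau) => /(_ p Hp) /orP [/eqP -> | /eqP Hs].
    by rewrite !mul0r if_same mul0r.
  case: p Hp Hs => c [|u [|x y]] Hp /= Hs.
  - by exfalso; move: M0; rewrite -Hs.
  - rewrite addn0 in Hs; rewrite -Hs eqxx addnC L_one //; lia.
  - by rewrite L_big // mulr0 (@neq_size [:: u, x & y]) ?mul0r.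
rewrite -big_distrl -big_mkcond /= -/(coef _ _) Htau.
rewrite prod_cons // (last_cons0 t) // natrM; ring.
Qed.
Lemma cf_filter (R : nmodType) (P : pred (R * mono)) (v : state R) s :
  coef (filter P v) s = \sum_(p <- v | P p && (p.2 == s)) p.1.
Proof. by rewrite /coef big_filter_cond. Qed.

Lemma tfact_eq tau : (0 < size tau)%N ->
  tfact tau = (sumn tau * \prod_(1 <= i < size tau) sumn (drop i tau))%N.
Proof.
move=> H; rewrite /tfact -(big_mkord xpredT (fun i => sumn (drop i tau))) big_ltn //.
by case: (tau) H.
Qed.

Theorem mainTheorem4 (R : numClosedFieldType) (eta lam : R) :
  (forall tau : seq nat, (0 < size tau)%N -> all (fun t => 0 < t)%N tau ->
     exists Rest : state R,
       all (fun p => 1 < size p.2)%N Rest /\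
       veq (Lword eta lam tau)
         ((((\prod_(1 <= i < size tau) sumn (drop i tau))%N)%:R
             * (eta + ((last 0%N tau)%:R - 1) * lam), [:: sumn tau]) :: Rest))
  /\
  (forall dh : int, dh < 0 ->
     forall Us : seq (R * seq nat),
       all (fun p => is_partition p.2 && (sumn p.2 == `|dh|)%N) Us ->
       coef (Ustate eta lam Us) [:: `|dh|%N] =
         - (dh%:~R)^-1 *
           \sum_(p <- Us) (tfact p.2)%:R * (eta + ((last 0%N p.2)%:R - 1) * lam) * p.1).
Proof.
split.
  move=> tau sz Hall.
  have M0 : (0 < sumn tau)%N by case: (tau) sz Hall => //= x y _ /andP [H _]; lia.
  exists (filter (fun p => 1 < size p.2)%N (Lword eta lam tau)); split.
    by apply/allP => p; rewrite mem_filter => /andP [].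
  move=> s; rewrite cf_cons cf_filter /=.
  case: (ltnP 1 (size s)) => Hs.
    rewrite (@neq_size [:: sumn tau] s); last by move: Hs; case: (size s) => [|[|]].
    rewrite add0r /coef; apply: eq_bigl => p.
    by case: (p.2 =P s) => [->|]; rewrite ?eqxx ?andbT ?andbF.
  rewrite [X in _ + X]big_pred0; last first.
    by move=> p; case: (p.2 =P s) => [->|]; rewrite ?andbT ?andbF // ltnNge Hs.
  rewrite addr0.
  case: s Hs => [|m [|]] // _.
    rewrite (cf_zero (Q := fun q => sumn q == sumn tau)) ?Lword_grade //=.
    by rewrite eq_sym -lt0n M0.
  case: (eqVneq m (sumn tau)) => [->|ne]; first by rewrite eqxx Lword_main.
  rewrite (cf_zero (Q := fun q => sumn q == sumn tau)) ?Lword_grade //=.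
    by case: eqP => // [[]] E; move: ne; rewrite E eqxx.
  by rewrite addn0.
move=> dh dh0 Us HUs.
set m := `|dh|%N.
have m0 : (0 < m)%N by rewrite /m absz_gt0; apply/eqP => E; move: dh0; rewrite E ltxx.
have Hd : dh%:~R = - (m%:R : R).
  by rewrite {1}(_ : dh = - (m%:Z)) ?intrN -?pmulrn // /m ltz0_abs // opprK.
have Hm : (m%:R : R) != 0 by rewrite pnatr_eq0 -lt0n.
rewrite /Ustate cf_flatten big_map Hd invrN opprK mulr_sumr.
apply: eq_big_seq => p Hp.
move/allP: HUs => /(_ p Hp) /andP [/andP [_ Hpos] /eqP Hsum].
have sz : (0 < size p.2)%N by move: m0; rewrite /m -Hsum; case: (p.2).
rewrite cf_scale /m -Hsum Lword_main // tfact_eq // natrM Hsum -/m.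
by field.
Qed.
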